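(* Let $\beta$ be irrational with continued fraction denominators $(q'_n)_{n\ge1}$. Let $f:\mathbb{T}\to\mathbb{R}$ be real analytic and not a trigonometric polynomial, with Fourier coefficients $a_k$, and let $(l_k)_{k\ge1}$ be a strictly increasing sequence of positive integers with $a_{l_k}\neq0$ and $|a_{l_k}|/T_{l_k}\to\infty$, where $T_n=\sum_{j\ge2}|a_{jn}|\,|jn|$. For $k\ge1$ let $\eta(k)$ be the smallest integer with $q'_{\eta(k)}>2k^2/|a_{l_k}|^2$. For $n,m\ge1$ let $V_{n,m}=\{\alpha\in\mathbb{R}\setminus\mathbb{Q}: q_n(\alpha)=l_m \text{ and } q_{n+1}(\alpha)>2q'_{\eta(m)}n^2\}$, and $\mathcal{U}_j=\bigcup_{n\ge1}V_{n,j}$. Then for every $M\ge1$ the set $\bigcup_{j\ge M}\mathcal{U}_j$ is dense in $\mathbb{R}$.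
   Context: For an irrational $\gamma=[c_0;c_1,c_2,\dots]$, its continued fraction denominators are $q_0=1$, $q_1=c_1$, $q_n=c_nq_{n-1}+q_{n-2}$; $q_n(\gamma)$ denotes the $n$-th one. $\mathbb{T}=\mathbb{R}/\mathbb{Z}$. *)

(* Defs.v *)
From Stdlib Require Import Reals ZArith Lra.
From Coquelicot Require Import Coquelicot.
Open Scope R_scope.

Definition irrational (x : R) : Prop :=
  ~ exists (p q : Z), q <> 0%Z /\ x = IZR p / IZR q.

Fixpoint cf_rem (x : R) (n : nat) : R :=
  match n with
  | O => x
  | S m => / frac_part (cf_rem x m)
  end.

Definition cf_digit (x : R) (n : nat) : Z := Int_part (cf_rem x n).

(* (q_{n-1}, q_n) with q_{-1} = 0, q_0 = 1, q_n = c_n q_{n-1} + q_{n-2} *)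
Fixpoint cf_qpair (x : R) (n : nat) : Z * Z :=
  match n with
  | O => (0%Z, 1%Z)
  | S m => let (a, b) := cf_qpair x m in (b, (cf_digit x (S m) * b + a)%Z)
  end.

Definition cf_q (x : R) (n : nat) : Z := snd (cf_qpair x n).

(* f : T -> R seen as a 1-periodic function on R *)
Definition periodic1 (f : R -> R) : Prop := forall x, f (x + 1) = f x.

Definition real_analytic (f : R -> R) : Prop :=
  forall x0 : R, exists (c : nat -> R) (r : R), 0 < r /\
    forall x, Rabs (x - x0) < r -> is_pseries c (x - x0) (f x).

Definition trig_poly (f : R -> R) : Prop :=
  exists (N : nat) (b c : nat -> R), forall x,
    f x = sum_f_R0 (fun k => b k * cos (2 * PI * INR k * x)
                           + c k * sin (2 * PI * INR k * x)) N.

(* |a_k| where a_k = \int_0^1 f(x) e^{-2 pi i k x} dx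
   = \int_0^1 f cos(2 pi k x) - i \int_0^1 f sin(2 pi k x) *)
Definition fourier_abs (f : R -> R) (k : nat) : R :=
  sqrt ((RInt (fun x => f x * cos (2 * PI * INR k * x)) 0 1) ^ 2
      + (RInt (fun x => f x * sin (2 * PI * INR k * x)) 0 1) ^ 2).

Definition Tsum (f : R -> R) (n : nat) : R :=
  Series (fun j => if (j <? 2)%nat then 0
                   else fourier_abs f (j * n) * INR (j * n)).

Definition Vset (beta : R) (l eta : nat -> nat) (n m : nat) (alpha : R) : Prop :=
  irrational alpha /\ cf_q alpha n = Z.of_nat (l m) /\
  IZR (cf_q alpha (S n)) > 2 * IZR (cf_q beta (eta m)) * INR n ^ 2.

Definition Uset (beta : R) (l eta : nat -> nat) (j : nat) (alpha : R) : Prop :=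
  exists n, (1 <= n)%nat /\ Vset beta l eta n j alpha.

Definition dense_R (S : R -> Prop) : Prop :=
  forall x eps, 0 < eps -> exists y, S y /\ Rabs (y - x) < eps.

(* Main.v *)
Require Import Defs.
From Stdlib Require Import Reals ZArith Lra Lia Classical FunctionalExtensionality.
From Coquelicot Require Import Coquelicot.
From mathcomp Require all_boot zify.
Open Scope R_scope.

Lemma Int_part_unique (r : R) (n : Z) : IZR n <= r < IZR n + 1 -> Int_part r = n.
Proof.
intros [h1 h2]. destruct (base_Int_part r) as [b1 b2].
assert (IZR (Int_part r) < IZR (n + 1)) by (rewrite plus_IZR; lra).
assert (IZR n < IZR (Int_part r + 1)) by (rewrite plus_IZR; lra).
apply lt_IZR in H. apply lt_IZR in H0. lia.
Qed.

Lemma frac_of (n : Z) t : 0 <= t < 1 -> frac_part (IZR n + t) = t /\ Int_part (IZR n + t) = n.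
Proof.
intros h. assert (Int_part (IZR n + t) = n) by (apply Int_part_unique; lra).
split; auto. unfold frac_part. rewrite H. ring.
Qed.

Lemma irr_neq0 x : irrational x -> x <> 0.
Proof. intros H e; subst. apply H. exists 0%Z, 1%Z. split; [lia|]. simpl. field. Qed.

Lemma irr_shift x z : irrational x -> irrational (x + IZR z).
Proof.
intros H [p [q [hq e]]]. apply H. exists (p - z*q)%Z, q. split; auto.
rewrite minus_IZR, mult_IZR. assert (IZR q <> 0) by (apply not_0_IZR; auto).
replace x with (x + IZR z - IZR z) by ring. rewrite e. field; auto.
Qed.

Lemma irr_inv x : irrational x -> irrational (/ x).
Proof.
intros H [p [q [hq e]]]. apply H. assert (hx : x <> 0) by (apply irr_neq0; auto).
assert (hp : p <> 0%Z).
{ intro; subst. assert (/ x <> 0) by (apply Rinv_neq_0_compat; auto).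
  apply H0. rewrite e. simpl. field. apply not_0_IZR; auto. }
exists q, p. split; auto.
assert (IZR q <> 0) by (apply not_0_IZR; auto).
assert (IZR p <> 0) by (apply not_0_IZR; auto).
rewrite <- (Rinv_inv x). rewrite e. field. auto.
Qed.

Lemma irr_frac x : irrational x -> irrational (frac_part x).
Proof.
intros H. replace (frac_part x) with (x + IZR (- Int_part x)).
apply irr_shift; auto. unfold frac_part. rewrite opp_IZR. ring.
Qed.

Lemma irr_frac_bounds x : irrational x -> 0 < frac_part x < 1.
Proof.
intros H. destruct (base_fp x) as [h1 h2].
assert (frac_part x <> 0) by (apply irr_neq0, irr_frac; auto). lra.
Qed.

Lemma cf_rem_shift x k : cf_rem x (S k) = cf_rem (/ frac_part x) k.
Proof. induction k; simpl; auto. simpl in IHk. rewrite IHk. reflexivity. Qed.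

Lemma cf_digit_shift x k : cf_digit x (S k) = cf_digit (/ frac_part x) k.
Proof. unfold cf_digit. rewrite cf_rem_shift. reflexivity. Qed.

Lemma cf_rem_irr x k : irrational x -> irrational (cf_rem x k).
Proof. intros H; induction k; simpl; auto. apply irr_inv, irr_frac; auto. Qed.

Lemma cf_rem_gt1 x k : irrational x -> 1 < cf_rem x (S k).
Proof.
intros H. simpl. destruct (irr_frac_bounds _ (cf_rem_irr x k H)).
rewrite <- Rinv_1. apply Rinv_lt_contravar; nra.
Qed.

Lemma cf_digit_ge1 x k : irrational x -> (1 <= cf_digit x (S k))%Z.
Proof.
intros H. unfold cf_digit. pose proof (cf_rem_gt1 x k H).
destruct (base_Int_part (cf_rem x (S k))) as [b1 b2].
assert (0 < IZR (Int_part (cf_rem x (S k)))) by lra. apply lt_IZR in H1. lia.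
Qed.

Fixpoint cont (d : nat -> Z) (a b : Z) (n : nat) : Z * Z :=
  match n with
  | O => (a, b)
  | S m => let (u, v) := cont d a b m in (v, (d (S m) * v + u)%Z)
  end.

Lemma qpair_cont x n : cf_qpair x n = cont (cf_digit x) 0 1 n.
Proof. induction n; simpl; auto. rewrite IHn. reflexivity. Qed.

Definition cf_p (x : R) (n : nat) : Z := snd (cont (cf_digit x) 1 (cf_digit x 0) n).

Lemma cont_shift d a b n : cont d a b (S n) = cont (fun k => d (S k)) b (d 1%nat * b + a)%Z n.
Proof.
induction n. reflexivity.
change (cont d a b (S (S n))) with (let (u, v) := cont d a b (S n) in (v, (d (S (S n)) * v + u)%Z)).
rewrite IHn. reflexivity.
Qed.

Lemma cont_lin d a b n : cont d a b n =
  ((a * fst (cont d 1 0 n) + b * fst (cont d 0 1 n))%Z, (a * snd (cont d 1 0 n) + b * snd (cont d 0 1 n))%Z).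
Proof.
induction n; simpl. f_equal; ring.
rewrite IHn. destruct (cont d 1 0 n) as [u1 v1]. destruct (cont d 0 1 n) as [u2 v2]. simpl. f_equal; ring.
Qed.

Lemma q_bounds x n : irrational x -> (0 <= fst (cf_qpair x n))%Z /\ (1 <= snd (cf_qpair x n))%Z.
Proof.
intros H. induction n; simpl. lia.
destruct (cf_qpair x n) as [u v]; simpl in *. pose proof (cf_digit_ge1 x n H). nia.
Qed.

Lemma q_succ_ge x n : irrational x -> IZR (cf_q x (S n)) > cf_rem x (S n) - 1.
Proof.
intros H. unfold cf_q. pose proof (q_bounds x n H) as H0. pose proof (cf_digit_ge1 x n H).
simpl. destruct (cf_qpair x n) as [u v] eqn:E; simpl in *.
destruct (base_Int_part (cf_rem x (S n))) as [b1 b2].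
destruct H0 as [H0a H0b].
assert (HH : (cf_digit x (S n) <= cf_digit x (S n) * v + u)%Z).
{ remember (cf_digit x (S n)) as d. clear -H0a H0b H1. nia. }
apply IZR_le in HH. unfold cf_digit in *. simpl in b1, b2. change (cf_rem x (S n)) with (/ frac_part (cf_rem x n)) in *. lra.
Qed.

Lemma digits_shift x : (fun k => cf_digit x (S k)) = cf_digit (/ frac_part x).
Proof. apply functional_extensionality; intro k; apply cf_digit_shift. Qed.

Lemma cfq_shift x n : cf_q x (S n) = cf_p (/ frac_part x) n.
Proof.
unfold cf_q, cf_p. rewrite qpair_cont, cont_shift, digits_shift, (cf_digit_shift x 0).
rewrite Z.mul_1_r, Z.add_0_r. reflexivity.
Qed.

Lemma cfp_shift x n : cf_p x (S n) = (cf_digit x 0 * cf_p (/ frac_part x) n + cf_q (/ frac_part x) n)%Z.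
Proof.
unfold cf_q, cf_p. rewrite qpair_cont, cont_shift, digits_shift, (cf_digit_shift x 0).
rewrite (cont_lin _ (cf_digit x 0)), (cont_lin _ 1 (cf_digit _ 0)), (cont_lin _ 0 1). cbn [snd fst]. ring.
Qed.
Module NT.
Import mathcomp.boot.all_boot mathcomp.zify.zify.
Set Warnings "-notation-overridden".
Local Open Scope nat_scope.
Delimit Scope R_scope with R.

Fixpoint cntP (P : nat -> bool) (a h : nat) : nat :=
  if h is h'.+1 then (cntP P a h' + P (a + h'))%N else 0%N.

Lemma cntP_ext P Q a h : (forall n, (a <= n < a + h)%N -> P n = Q n) -> cntP P a h = cntP Q a h.
Proof.
elim: h => [|h IH] H //=. rewrite IH ?H //; first lia. move=> n hn; apply: H; lia.
Qed.

Lemma cntP_split A D a h : cntP A a h = (cntP (fun n => A n && ~~ D n) a h + cntP (fun n => D n && A n) a h)%N.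
Proof. elim: h => [|h IH] //=. rewrite IH. case: (A _); case: (D _) => /=; lia. Qed.

Lemma cntP_pos P a h : (0 < cntP P a h)%N -> exists n, (a <= n < a + h)%N /\ P n.
Proof.
elim: h => [|h IH] //=. case hP: (P (a + h)).
  move=> _; exists (a + h)%N; split => //; lia.
rewrite addn0 => /IH [n [hn Pn]]; exists n; split => //; lia.
Qed.

Lemma ceil_ex p x : (0 < p)%N -> exists b, (x <= p * b < x + p)%N.
Proof.
move=> hp. exists ((x + p.-1) %/ p)%N.
have h1 := divn_eq (x + p.-1) p. have h2 := ltn_pmod (x + p.-1) hp.
move: h1 h2. set d := ((x + p.-1) %/ p)%N. set r := ((x + p.-1) %% p)%N. nia.
Qed.

Lemma mult_count p A a h b e : (0 < p)%N -> (a <= p * b < a + p)%N -> (a + h <= p * e < a + h + p)%N ->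
  cntP (fun n => (p %| n) && A (n %/ p)) a h = cntP A b (e - b).
Proof.
move=> hp hb. elim: h e => [|h IH] e he /=.
  have -> : e = b by nia. by rewrite subnn.
have [u hu] := @ceil_ex p (a + h) hp.
rewrite (IH u hu).
case hd: (p %| a + h).
  move/dvdnP: hd => [v hv]. rewrite hv mulnK //=.
  have hvu : u = v by nia.
  have hev : e = v.+1 by nia.
  subst. have hbv : (b <= v)%N by nia.
  have -> : (v.+1 - b = (v - b).+1)%N by lia.
  rewrite /= (_ : (b + (v - b))%N = v) //; lia.
have heu : e = u.
  have : (p * e != a + h + p)%N.
    apply/negP => /eqP hh. move: hd. rewrite (_ : (a + h = p * (e - 1))%N) ?dvdn_mulr //. nia.
  nia.
subst; rewrite /=; lia.
Qed.

Lemma INR_muln a b : INR (a * b) = (INR a * INR b)%R.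
Proof. exact: mult_INR. Qed.
Lemma INR_addn a b : INR (a + b) = (INR a + INR b)%R.
Proof. exact: plus_INR. Qed.
Lemma INR_leq a b : a <= b -> (INR a <= INR b)%R.
Proof. move/leP; exact: le_INR. Qed.
Lemma INR_ltn a b : a < b -> (INR a < INR b)%R.
Proof. move/ltP; exact: lt_INR. Qed.
Arguments INR_leq {a b}.
Arguments INR_ltn {a b}.

Definition cnt q a h := cntP (fun n => coprime n q) a h.

Definition Gf (q : nat) (rho : R) (w : nat) : R := (INR q * rho / 2 ^ w)%R.

Lemma cnt1 a h : cnt 1 a h = h.
Proof. rewrite /cnt; elim: h => [|h IH] //=. by rewrite IH coprimen1 addn1. Qed.

Lemma count_step p m k a h : prime p -> coprime p m -> 0 < k ->
  exists b e, (INR h - INR p < INR p * INR (e - b) < INR h + INR p)%R /\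
    cnt m a h = cnt (m * p ^ k) a h + cnt m b (e - b).
Proof.
move=> pp cpm hk. have p0 : 0 < p by apply: ltnW; apply: prime_gt1.
have [b hb] := @ceil_ex p a p0. have [e he] := @ceil_ex p (a + h) p0.
exists b, e. split.
  have heb : b <= e by nia.
  have h1 : p * (e - b) + p > h by nia.
  have h2 : p * (e - b) < h + p by nia.
  apply INR_ltn in h1; apply INR_ltn in h2. rewrite INR_addn INR_muln in h1.
  rewrite INR_addn INR_muln in h2. lra.
rewrite /cnt (cntP_split _ (fun n => p %| n)). congr addn.
  apply: cntP_ext => n _. by rewrite coprimeMr coprime_pexpr // (coprime_sym n p) (prime_coprime _ pp).
transitivity (cntP (fun n => (p %| n) && (fun n => coprime n m) (n %/ p)) a h); last exact: mult_count.
apply: cntP_ext => n _.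
case hd: (p %| n) => //=. move/dvdnP: hd => [v ->]. rewrite mulnK //.
by rewrite coprimeMl cpm andbT.
Qed.

Lemma inv q : 0 < q -> exists (rho : R) (w : nat), (0 < rho <= 1)%R /\
 (forall a h, Rabs (INR (cnt q a h) - INR h * rho) <= 2 ^ w - 1)%R /\
 (forall s j, prime s -> s ^ j %| q -> (INR (s ^ j) <= 6 * Gf q rho w)%R) /\
 (odd q -> (1 <= Gf q rho w)%R /\
    forall s j, prime s -> s ^ j %| q -> (INR (s ^ j) <= 3 * Gf q rho w)%R).
Proof.
elim/ltn_ind: q => q IH q0.
have [q1|qgt1] : q = 1 \/ 1 < q by lia.
  subst. exists 1%R, 0. split; [lra|]. split.
    move=> a h; rewrite cnt1 /= Rmult_1_r Rminus_diag Rabs_R0; lra.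
  have H1 : forall s j, s ^ j %| 1 -> (INR (s ^ j) <= 3 * Gf 1 1 0)%R.
    move=> s j; rewrite dvdn1 => /eqP ->. rewrite /Gf /=. lra.
  split. move=> s j _ /H1; rewrite /Gf /= => hh; lra. move=> _; split; last by move=> s j _ /H1.
  rewrite /Gf /=; lra.
pose p := if odd q then pdiv q else 2.
have pp : prime p by rewrite /p; case: ifP => _; [apply: pdiv_prime|].
have pdq : p %| q by rewrite /p; case: ifP => ho; [exact: pdiv_dvd | by rewrite dvdn2 ho].
have p3 : odd q -> 3 <= p.
  move=> ho; have := prime_gt1 pp. have : p != 2.
    apply/eqP => e. move: pdq; rewrite e dvdn2 ho //.
  lia.
have [m cpm qe] := pfactor_coprime pp q0. set k := logn p q in qe.
have m0 : 0 < m by move: q0; rewrite qe muln_gt0 => /andP[].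
have k0 : 0 < k.
  rewrite lt0n; apply/negP => /eqP k0'. move: cpm. rewrite (prime_coprime _ pp).
  by rewrite -(muln1 m) -(expn0 p) -k0' -qe pdq.
have pk_ge : p <= p ^ k.
  rewrite -{1}(expn1 p); apply: leq_pexp2l => //. exact: ltnW (prime_gt1 pp).
have mq : m < q.
  rewrite qe; have := prime_gt1 pp; move: pk_ge m0; set t := p ^ k; nia.
have modd : odd m.
  case: (boolP (odd q)) => ho. by move: ho; rewrite qe oddM => /andP[].
  have p2 : p = 2 by rewrite /p (negbTE ho).
  by move: cpm; rewrite p2 coprime2n.
have [rho' [w' [hr [herr [hg6 hodd]]]]] := IH m mq m0.
have [G1 hg3] := hodd modd.
have P2 : (2 <= INR p)%R by have := INR_leq (prime_gt1 pp); rewrite /= => hh; lra.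
have Pk : (INR p <= INR (p ^ k))%R. by exact: (INR_leq pk_ge).
have hinvP : (0 < / INR p <= /2)%R.
  split; [apply Rinv_0_lt_compat; lra| apply Rinv_le_contravar; lra].
have pw : (0 < 2 ^ w')%R by apply: pow_lt; lra.
set f := (INR (p ^ k) * (1 - / INR p) / 2)%R.
have hG : Gf q (rho' * (1 - / INR p)) w'.+1 = (Gf m rho' w' * f)%R.
  rewrite /Gf /f qe INR_muln /=. field. lra.
have f4 : (INR (p ^ k) <= 4 * f)%R by rewrite /f; nra.
have f2 : (/2 <= f)%R by rewrite /f; nra.
have f3 : odd q -> (INR (p ^ k) <= 3 * f)%R /\ (1 <= f)%R.
  move=> ho. have P3 : (3 <= INR p)%R by have := INR_leq (p3 ho); rewrite /= => hh; lra.
  have : (/ INR p <= /3)%R by apply Rinv_le_contravar; lra.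
  rewrite /f; split; nra.
have Hsp : forall s j, prime s -> s ^ j %| q -> s = p -> (INR (s ^ j) <= INR (p ^ k))%R.
  move=> s j ps hd sp; subst s. apply: INR_leq; apply: dvdn_leq; first by rewrite expn_gt0 (ltnW (prime_gt1 pp)).
  by rewrite -(Gauss_dvdr (p ^ k) (coprimeXl j cpm)) -qe.
have Hsm : forall s j, prime s -> s ^ j %| q -> s != p -> s ^ j %| m.
  move=> s j ps hd sp. have csp : coprime s p by rewrite (prime_coprime _ ps) (dvdn_prime2 ps pp).
  by rewrite -(Gauss_dvdl m (coprimeXr k (coprimeXl j csp))) -qe.
have GG : (0 <= Gf m rho' w')%R by lra.
exists (rho' * (1 - / INR p))%R, w'.+1.
split; first by split; nra.
split.
  move=> a h. have [b [e [hX hc]]] := @count_step p m k a h pp cpm k0. rewrite -qe in hc.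
  have := herr a h; have := herr b (e - b).
  set X := INR (e - b) in hX *. set C1 := INR (cnt m a h). set C2 := INR (cnt m b (e - b)).
  have hC : INR (cnt q a h) = (C1 - C2)%R by rewrite /C1 /C2 hc INR_addn; ring.
  have e1 : (INR p * / INR p = 1)%R by field; lra.
  have hY : (-1 < X - INR h * / INR p < 1)%R.
    have <- : ((INR p * X - INR h) * / INR p = X - INR h * / INR p)%R by field; lra.
    have i1 := Rmult_lt_compat_r (/ INR p) (- INR p) (INR p * X - INR h) (proj1 hinvP) ltac:(lra).
    have i2 := Rmult_lt_compat_r (/ INR p) (INR p * X - INR h) (INR p) (proj1 hinvP) ltac:(lra).
    rewrite Ropp_mult_distr_l_reverse e1 in i1. rewrite e1 in i2. lra.
  have hrY : (-1 <= rho' * (X - INR h * / INR p) <= 1)%R by nra.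
  rewrite hC (_ : (C1 - C2 - INR h * (rho' * (1 - / INR p)) = (C1 - INR h * rho') - (C2 - X * rho') - rho' * (X - INR h * / INR p))%R); last by ring.
  rewrite -tech_pow_Rmult. rewrite !Rabs_le_between. lra.
split.
  move=> s j ps hd. rewrite hG. case: (eqVneq s p) => sp.
    have := Hsp s j ps hd sp. nra.
  have := hg3 s j ps (Hsm s j ps hd sp). nra.
move=> ho. have [f3a f1] := f3 ho. rewrite hG. split; first nra.
move=> s j ps hd. case: (eqVneq s p) => sp.
  have := Hsp s j ps hd sp. nra.
have := hg3 s j ps (Hsm s j ps hd sp). nra.
Qed.

Lemma fact_div N q : 0 < q -> (forall s j, prime s -> s ^ j %| q -> s ^ j <= N) -> q %| N`!.
Proof.
elim/ltn_ind: q => q IH q0 H.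
have [q1|qgt1] : q = 1 \/ 1 < q by lia.
  by rewrite q1 dvd1n.
have pp := pdiv_prime qgt1. set p := pdiv q in pp.
have pdq : p %| q by exact: pdiv_dvd.
have [m cpm qe] := pfactor_coprime pp q0. set k := logn p q in qe.
have m0 : 0 < m by move: q0; rewrite qe muln_gt0 => /andP[].
have k0 : 0 < k.
  rewrite lt0n; apply/negP => /eqP k0'. move: cpm. rewrite (prime_coprime _ pp).
  by rewrite -(muln1 m) -(expn0 p) -k0' -qe pdq.
have pk_ge : p <= p ^ k.
  rewrite -{1}(expn1 p); apply: leq_pexp2l => //. exact: ltnW (prime_gt1 pp).
have mq : m < q.
  rewrite qe; have := prime_gt1 pp; move: pk_ge m0; set t := p ^ k; nia.
rewrite qe Gauss_dvd; last by rewrite coprime_sym; apply: coprimeXl.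
apply/andP; split.
  apply: IH => // s j ps hd. apply: H => //. rewrite qe. exact: dvdn_mulr.
apply: dvdn_fact. rewrite expn_gt0 (ltnW (prime_gt1 pp)) /=. apply: H => //.
by rewrite qe dvdn_mull.
Qed.

Lemma NT_exists (eps : R) : (0 < eps)%R -> exists Q0, forall q, Q0 <= q -> forall a h,
  (eps * INR q <= INR h)%R -> exists n, a <= n < a + h /\ coprime n q.
Proof.
move=> he.
pose N := Z.to_nat (up (6 / eps)).
have hN : (6 / eps < INR N)%R.
  have [h1 _] := archimed (6 / eps).
  have h6 : (0 < 6 / eps)%R by apply: Rdiv_lt_0_compat; lra.
  have hu : (0 <= up (6 / eps))%Z by apply: le_IZR; lra.
  by rewrite /N INR_IZR_INZ Z2Nat.id.
exists (N`!).+1 => q hq a h hh.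
have q0 : 0 < q by apply: leq_trans hq.
have [rho [w [hr [herr [hg _]]]]] := @inv q q0.
have [s [j [ps [hd hlt]]]] : exists s j, prime s /\ s ^ j %| q /\ N < s ^ j.
  apply: NNPP => hn.
  have : q %| N`!.
    apply: (@fact_div N q q0) => s j ps hd. rewrite leqNgt; apply/negP => hlt; apply: hn.
    by exists s, j.
  move/(dvdn_leq (fact_gt0 N)). lia.
have := hg s j ps hd. have := INR_ltn hlt.
have pw : (0 < 2 ^ w)%R by apply: pow_lt; lra.
have hG : (INR q * rho = Gf q rho w * 2 ^ w)%R by rewrite /Gf; field; lra.
move=> i1 i2.
have hG1 : (1 < eps * Gf q rho w)%R.
  have : (6 / eps * eps = 6)%R by field; lra.
  nra.
have := herr a h. rewrite Rabs_le_between => hc.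
have hq0 : (0 <= INR q)%R by apply: pos_INR.
have hcp : (0 < INR (cnt q a h))%R by nra.
apply: cntP_pos. case: (posnP (cnt q a h)) => // c0.
by move: hcp; rewrite /cnt in c0 *; rewrite c0 /=; lra.
Qed.

Lemma cf_build (Y0 : R) : irrational Y0 -> forall Q, 0 < Q -> forall r, r < Q -> coprime r Q ->
  forall (c0 : Z) (eps : R), (0 < eps)%R -> forall B : nat -> R,
  exists alpha n, irrational alpha /\ (Rabs (alpha - (IZR c0 + INR r / INR Q)) < eps)%R /\
    cf_p alpha n = (c0 * Z.of_nat Q + Z.of_nat r)%Z /\ cf_q alpha n = Z.of_nat Q /\
    (cf_rem alpha n.+1 > B n)%R.
Proof.
move=> HY. elim/ltn_ind => Q IH Q0 r rQ crQ c0 eps he B.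
case: (posnP r) => [r0 | rpos].
  subst r. move: crQ; rewrite /coprime gcd0n => /eqP Q1. subst Q.
  pose K := (Rmax 1 (Rmax (B 0%N) (/ eps)) + 1)%R.
  pose Y := (Y0 + IZR (up (K - Y0)))%R.
  have hY : (K < Y)%R by have [h1 _] := archimed (K - Y0); rewrite /Y; lra.
  have hK1 : (1 <= Rmax 1 (Rmax (B 0%N) (/ eps)))%R by apply: Rmax_l.
  have hK2 : (Rmax (B 0%N) (/ eps) <= Rmax 1 (Rmax (B 0%N) (/ eps)))%R by apply: Rmax_r.
  have hK3 : (B 0%N <= Rmax (B 0%N) (/ eps))%R by apply: Rmax_l.
  have hK4 : (/ eps <= Rmax (B 0%N) (/ eps))%R by apply: Rmax_r.
  have Yirr : irrational Y by apply: irr_shift.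
  have hiY : (0 < / Y < 1)%R.
    split; first by apply: Rinv_0_lt_compat; rewrite /K in hY; lra.
    rewrite -Rinv_1; apply: Rinv_lt_contravar; rewrite /K in hY; lra.
  have [hfr hint] := frac_of c0 (/ Y) (conj (Rlt_le _ _ (proj1 hiY)) (proj2 hiY)).
  exists (IZR c0 + / Y)%R, 0%N. split.
    rewrite Rplus_comm; apply: irr_shift; exact: irr_inv.
  split.
    rewrite /= Rdiv_1_r Rplus_0_r (_ : (IZR c0 + / Y - IZR c0 = / Y)%R); last by ring.
    rewrite Rabs_pos_eq; last lra.
    rewrite -(Rinv_inv eps). apply: Rinv_lt_contravar.
      apply: Rmult_lt_0_compat; [apply: Rinv_0_lt_compat|]; rewrite /K in hY; lra.
    rewrite /K in hY; lra.
  split. rewrite /cf_p /= /cf_digit /= hint. lia.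
  split. by [].
  rewrite /= hfr Rinv_inv. rewrite /K in hY; lra.
have rlt : Q %% r < r := ltn_pmod Q rpos.
have cop : coprime (Q %% r) r by rewrite coprime_modl coprime_sym.
have rR : (0 < INR r)%R by apply: (@INR_ltn 0 r).
have QR : (INR r < INR Q)%R by apply: INR_ltn.
pose d := (INR Q / INR r)%R.
have d1 : (1 < d)%R.
  rewrite /d. apply: (Rmult_lt_reg_r (INR r)) => //. rewrite /Rdiv Rmult_assoc Rinv_l; lra.
pose eps' := Rmin eps ((d - 1) / 2).
have he' : (0 < eps')%R by apply: Rmin_pos; lra.
have e1 : (eps' <= eps)%R by apply: Rmin_l.
have e2 : (eps' <= (d - 1) / 2)%R by apply: Rmin_r.
have [x1 [n1 [hirr [hcl [hp [hq hrem]]]]]] :=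
  IH r rQ rpos (Q %% r) rlt cop (Z.of_nat (Q %/ r)) eps' he' (fun k => B k.+1).
have hval : (IZR (Z.of_nat (Q %/ r)) + INR (Q %% r) / INR r = d)%R.
  rewrite /d -INR_IZR_INZ. have e := divn_eq Q r. move: e. set u := Q %/ r. set v := Q %% r. move=> e. rewrite e INR_addn INR_muln. field; lra.
rewrite hval in hcl. move: hcl; rewrite Rabs_lt_between => hcl.
have x1gt : (1 < x1)%R by lra.
have hix : (0 < / x1 < 1)%R.
  split; first by apply: Rinv_0_lt_compat; lra.
  rewrite -Rinv_1; apply: Rinv_lt_contravar; lra.
have [hfr hint] := frac_of c0 (/ x1) (conj (Rlt_le _ _ (proj1 hix)) (proj2 hix)).
have hx1 : (/ frac_part (IZR c0 + / x1) = x1)%R by rewrite hfr Rinv_inv.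
have hQ : (Z.of_nat (Q %/ r) * Z.of_nat r + Z.of_nat (Q %% r))%Z = Z.of_nat Q.
  have e := divn_eq Q r. move: e. set u := Q %/ r. set v := Q %% r. move=> e. rewrite e. lia.
exists (IZR c0 + / x1)%R, n1.+1. split.
  rewrite Rplus_comm; apply: irr_shift; exact: irr_inv.
split.
  have hrQ : (INR r / INR Q = / d)%R by rewrite /d; field; lra.
  rewrite hrQ (_ : (IZR c0 + / x1 - (IZR c0 + / d) = (d - x1) * / (x1 * d))%R); last by field; lra.
  have ht : (0 < / (x1 * d) < 1)%R.
    split; first by apply: Rinv_0_lt_compat; nra.
    rewrite -Rinv_1; apply: Rinv_lt_contravar; nra.
  rewrite Rabs_lt_between. split; nra.
split. rewrite cfp_shift hx1 hq hp hQ /cf_digit /= hint. lia.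
split. by rewrite cfq_shift hx1 hp hQ.
by rewrite cf_rem_shift hx1.
Qed.

Lemma Key (Y0 : R) (eps : R) : irrational Y0 -> (0 < eps)%R -> exists Q0 : nat,
  forall q : nat, (Q0 <= q)%coq_nat -> forall (x : R) (B : nat -> R),
  exists alpha n, irrational alpha /\ (Rabs (alpha - x) < eps)%R /\ cf_q alpha n = Z.of_nat q /\
    (IZR (cf_q alpha n.+1) > B n)%R /\ (1 <= n)%coq_nat.
Proof.
move=> HY he.
have [Q1 HQ1] := NT_exists (eps / 4) ltac:(lra).
pose Q2 := Z.to_nat (up (4 / eps)).
have hQ2 : (4 / eps < INR Q2)%R.
  have [h1 _] := archimed (4 / eps).
  have h6 : (0 < 4 / eps)%R by apply: Rdiv_lt_0_compat; lra.
  have hu : (0 <= up (4 / eps))%Z by apply: le_IZR; lra.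
  by rewrite /Q2 INR_IZR_INZ Z2Nat.id.
exists (maxn (maxn Q1 Q2) 2) => q /leP hq x B.
have q2 : 2 <= q by lia.
have q1 : Q1 <= q by lia.
have hq2 : (4 / eps < INR q)%R.
  apply: (Rlt_le_trans _ _ _ hQ2). apply: INR_leq. lia.
have hq4 : (1 < eps / 4 * INR q)%R.
  have : (4 / eps * eps = 4)%R by field; lra.
  nra.
pose t := frac_part x. pose c := Int_part x.
have [t0 t1] := base_fp x.
have hx : x = (IZR c + t)%R by rewrite /t /c /frac_part; ring.
have hqt : (0 <= INR q * t)%R by apply: Rmult_le_pos; [apply: pos_INR| rewrite /t; lra].
pose a := Z.to_nat (Int_part (INR q * t)).
have [b1 b2] := base_Int_part (INR q * t).
have ha0 : (0 <= Int_part (INR q * t))%Z.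
  have : (-1 < Int_part (INR q * t))%Z by apply: lt_IZR; lra.
  lia.
have ha : INR a = IZR (Int_part (INR q * t)) by rewrite /a INR_IZR_INZ Z2Nat.id.
pose h := Z.to_nat (up (eps / 4 * INR q)).
have [u1 u2] := archimed (eps / 4 * INR q).
have hh : INR h = IZR (up (eps / 4 * INR q)).
  rewrite /h INR_IZR_INZ Z2Nat.id //. apply: le_IZR; lra.
have [n [hn cn]] := HQ1 q q1 a h ltac:(rewrite hh; lra).
have hn1 : (INR a <= INR n)%R by apply: INR_leq; lia.
have hn2 : (INR n + 1 <= INR a + INR h)%R.
  rewrite -S_INR -INR_addn. apply: INR_leq. lia.
have q0 : 0 < q by lia.
have rq : n %% q < q := ltn_pmod n q0.
have cop : coprime (n %% q) q by rewrite coprime_modl.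
have [al [k [hirr [hcl [hp [hq' hrem]]]]]] :=
  @cf_build Y0 HY q q0 (n %% q) rq cop (c + Z.of_nat (n %/ q))%Z (eps / 2) ltac:(lra) (fun k => B k + 1)%R.
have qR : (0 < INR q)%R by apply: (@INR_ltn 0 q).
have hval : (IZR (c + Z.of_nat (n %/ q)) + INR (n %% q) / INR q = IZR c + INR n / INR q)%R.
  rewrite plus_IZR -INR_IZR_INZ. have e := divn_eq n q. move: e.
  set u := n %/ q. set v := n %% q. move=> e. rewrite e INR_addn INR_muln. field; lra.
rewrite hval in hcl.
exists al, k. split => //. split.
  have hd : (Rabs (INR n / INR q - t) <= eps / 4)%R.
    rewrite Rabs_le_between. 
    have e3 : (INR n / INR q - t = (INR n - INR q * t) / INR q)%R by field; lra.
    have e4 : (eps / 4 = (eps / 4 * INR q) / INR q)%R by field; lra.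
    rewrite e3 e4. split.
      rewrite -Ropp_div. apply: Rmult_le_compat_r. by apply: Rlt_le; apply: Rinv_0_lt_compat.
      lra.
    apply: Rmult_le_compat_r. by apply: Rlt_le; apply: Rinv_0_lt_compat.
    lra.
  rewrite hx. move: hcl hd. rewrite !Rabs_lt_between Rabs_le_between. lra.
split => //. split.
  have := q_succ_ge al k hirr. lra.
apply/leP. case: k hp hq' hrem => [|k] // hp hq' _.
move: hq'. rewrite /cf_q /=. lia.
Qed.
End NT.

Theorem lemma6p2
  (beta : R) (f : R -> R) (l eta : nat -> nat)
  (Hbeta : irrational beta)
  (Hper : periodic1 f) (Han : real_analytic f) (Hntp : ~ trig_poly f)
  (Hlpos : forall k, (1 <= k)%nat -> (0 < l k)%nat)
  (Hlinc : forall k, (1 <= k)%nat -> (l k < l (S k))%nat)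
  (Hanz : forall k, (1 <= k)%nat -> fourier_abs f (l k) <> 0)
  (Hlim : forall C : R, exists K, forall k, (K <= k)%nat ->
            C * Tsum f (l k) < fourier_abs f (l k))
  (Heta : forall k, (1 <= k)%nat ->
     (1 <= eta k)%nat /\
     IZR (cf_q beta (eta k)) > 2 * INR k ^ 2 / (fourier_abs f (l k)) ^ 2 /\
     (forall n, (1 <= n)%nat -> (n < eta k)%nat ->
        ~ (IZR (cf_q beta n) > 2 * INR k ^ 2 / (fourier_abs f (l k)) ^ 2))) :
  forall M : nat, (1 <= M)%nat ->
    dense_R (fun alpha => exists j, (M <= j)%nat /\ Uset beta l eta j alpha).
Proof.
intros M HM x eps heps.
destruct (NT.Key beta eps Hbeta heps) as [Q0 HQ].
assert (lge : forall k, (1 <= k)%nat -> (k <= l k)%nat).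
{ induction k as [|k IHk]; intros hk; [lia|].
  destruct k as [|k]. pose proof (Hlpos 1%nat hk). lia.
  assert (h1 : (1 <= S k)%nat) by lia. specialize (IHk h1). specialize (Hlinc (S k) h1). lia. }
set (m := Nat.max (Nat.max M Q0) 1).
assert (hm1 : (1 <= m)%nat) by lia.
assert (hlm : (Q0 <= l m)%nat) by (pose proof (lge m hm1); lia).
destruct (HQ (l m) hlm x (fun n => 2 * IZR (cf_q beta (eta m)) * INR n ^ 2)) as
  [alpha [n [hirr [hcl [hq [hB hn]]]]]].
exists alpha. split; auto.
exists m. split; [lia|].
exists n. split; auto.
unfold Vset. repeat split; auto.
Qed.
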